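(* Let $m \ge 2$ and $n \ge 2m$ be integers. Then for every real $r$ with $|r|<1$, $$\int_{-1}^1 \frac{U_n(s)(1-s^2)^{m-\frac{1}{2}}}{(s-r)^3}\,ds = (-1)^{m}\left(\frac{1}{2}\right)^{2m}\frac{\pi}{1-r^2}\sum_{j=0}^{2m-2}(-1)^j\binom{2m-2}{j}(n+3-2m+2j)\Big[(n+4-2m+2j)U_{n+1-2m+2j}(r)-(n+2-2m+2j)U_{n+3-2m+2j}(r)\Big],$$ where the integral is a Hadamard finite-part integral.
   Context: $U_k(s)=\frac{\sin((k+1)\cos^{-1}s)}{\sin(\cos^{-1}s)}$ is the Tchebyshev polynomial of the second kind. For a positive integer $\alpha\ge 2$ and $|r|<1$, the integral $\int_{-1}^1 \frac{D(s)}{(s-r)^\alpha}ds$ is understood in the Hadamard finite-part sense; in particular it satisfies $\int_{-1}^1 \frac{D(s)}{(s-r)^{\alpha}}ds=\frac{1}{\alpha-1}\frac{d}{dr}\int_{-1}^1\frac{D(s)}{(s-r)^{\alpha-1}}ds$, where for $\alpha-1=1$ the right-hand integral is a Cauchy principal value. $\binom{a}{j}=\frac{a!}{j!(a-j)!}$. *)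

(* Defs.v *)
From Stdlib Require Import Reals.
From Coquelicot Require Import Coquelicot.
Open Scope R_scope.

Definition chebU (k : nat) (s : R) : R :=
  sin (INR (k + 1) * acos s) / sin (acos s).

(* Cauchy principal value of int_{-1}^{1} D(s)/(s-r) ds:
   limit as e -> 0 (e <> 0, |e| used as the excision radius) of the
   integral over [-1, r-|e|] U [r+|e|, 1]. *)
Definition cauchy_pv (D : R -> R) (r : R) : R :=
  real (Lim (fun e => RInt (fun s => D s / (s - r)) (-1) (r - Rabs e)
                    + RInt (fun s => D s / (s - r)) (r + Rabs e) 1) 0).

(* Hadamard finite-part integral  int_{-1}^{1} D(s)/(s-r)^a ds  (a >= 1),
   defined by the relation of the paper:
   order 1 = Cauchy principal value,
   order (b+1) = (1/b) d/dr (order b). *)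
Fixpoint hadamard_fp (D : R -> R) (a : nat) (r : R) {struct a} : R :=
  match a with
  | O => 0
  | S O => cauchy_pv D r
  | S b => / INR b * Derive (hadamard_fp D b) r
  end.

(* Main.v *)
Require Import Defs.
From Stdlib Require Import Reals Lra Lia.
From Coquelicot Require Import Coquelicot.
Open Scope R_scope.

Lemma cont_iff f x : continuity_pt f x <-> continuous f x.
Proof. apply continuity_pt_filterlim. Qed.

Lemma acos_cont_1 : continuity_pt acos 1.
Proof.
  intros eps Heps.
  set (e := Rmin eps (PI/2)).
  assert (He : 0 < e) by (unfold e; apply Rmin_glb_lt; [lra| pose proof PI_RGT_0; lra]).
  assert (He2 : e <= PI/2) by (unfold e; apply Rmin_r).
  assert (He3 : e <= eps) by (unfold e; apply Rmin_l).
  pose proof PI_RGT_0.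
  assert (Hc : cos e < 1) by (rewrite <- cos_0; apply cos_decreasing_1; lra).
  assert (Hc0 : 0 <= cos e) by (apply cos_ge_0; lra).
  exists (1 - cos e); split; [lra|].
  intros y [_ Hy]. simpl in Hy. unfold R_dist in *. simpl. unfold R_dist.
  rewrite acos_1, Rminus_0_r.
  destruct (Rle_dec 1 y).
  - unfold acos; destruct (Rle_dec y (-1)); [lra|]. destruct (Rle_dec 1 y); [|lra].
    rewrite Rabs_R0; lra.
  - assert (y > cos e) by (apply Rabs_def2 in Hy; lra).
    pose proof (acos_bound y).
    rewrite Rabs_right by lra.
    destruct (Rlt_le_dec (acos y) e) as [h|h]; [lra|].
    exfalso.
    assert (cos (acos y) <= cos e).
    { destruct (Req_dec (acos y) e) as [E|E]; [rewrite E; lra|].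
      left; apply cos_decreasing_1; lra. }
    rewrite cos_acos in H2; lra.
Qed.

Lemma acos_cont : forall x, continuous acos x.
Proof.
  intros x.
  destruct (Rlt_le_dec x (-1)) as [h|h].
  - apply continuous_ext_loc with (fun _ => PI); [|apply continuous_const].
    apply (filter_imp (fun y => y < -1)); [|apply (open_lt (-1) x h)].
    intros y hy. unfold acos; destruct (Rle_dec y (-1)); [reflexivity|lra].
  - destruct (Rle_lt_dec 1 x) as [h1|h1].
    + destruct h1 as [h1|h1].
      * apply continuous_ext_loc with (fun _ => 0); [|apply continuous_const].
        apply (filter_imp (fun y => 1 < y)); [|apply (open_gt 1 x h1)].
        intros y hy. unfold acos; destruct (Rle_dec y (-1)); [lra|].
        destruct (Rle_dec 1 y); [reflexivity|lra].
      * subst x. apply cont_iff, acos_cont_1.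
    + destruct h as [h|h].
      * apply cont_iff, derivable_continuous_pt, derivable_pt_acos; lra.
      * subst x.
        apply (continuous_ext_loc _ (fun y => minus PI (acos (- y)))).
        { apply filter_forall; intros y. rewrite acos_opp; unfold minus, plus, opp; simpl; ring. }
        apply (continuous_minus (fun _ => PI) (fun y => acos (-y))); [apply continuous_const|].
        apply (continuous_comp (fun y => - y) acos).
        { exact (continuous_opp (fun y : R => y) (-1) (continuous_id _)). }
        replace (- -1) with 1 by ring. apply cont_iff, acos_cont_1.
Qed.

Lemma ftc_end (f F : R -> R) a b d : a < b -> 0 < d ->
  (forall x, a - d < x < b + d -> continuous f x) ->
  (forall x, a < x < b -> is_derive F x (f x)) ->
  continuous F a -> continuous F b ->
  RInt f a b = F b - F a.
Proof.
  intros hab hd hf hF hFa hFb.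
  assert (Hex : forall u v, a - d < u < b + d -> a - d < v < b + d -> ex_RInt f u v).
  { intros u v hu hv. apply (@ex_RInt_continuous R_CompleteNormedModule). intros z hz. apply hf.
    split.
    - apply Rlt_le_trans with (Rmin u v); [|lra]. apply Rmin_glb_lt; lra.
    - apply Rle_lt_trans with (Rmax u v); [lra|]. apply Rmax_lub_lt; lra. }
  assert (HD : forall t, a - d < t < b + d -> is_derive (RInt f a) t (f t)).
  { intros t ht. apply (@is_derive_RInt R_NormedModule f (RInt f a) a t); [|apply hf; lra].
    apply (locally_interval _ t (a - d) (b + d)); simpl; try lra.
    intros y h1 h2. apply (@RInt_correct R_CompleteNormedModule), Hex; simpl in *; lra. }
  destruct (MVT_gen (fun t => RInt f a t - F t) a b (fun t => f t - f t)) as [c [hc E]].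
  - rewrite Rmin_left, Rmax_right by lra. intros x hx.
    apply (is_derive_minus (RInt f a) F x (f x) (f x)); [apply HD; lra| apply hF; lra].
  - rewrite Rmin_left, Rmax_right by lra. intros x hx. apply cont_iff.
    apply (continuous_minus (RInt f a) F).
    + apply ex_derive_continuous. eexists. apply HD; lra.
    + destruct (Req_dec x a) as [->|na]; [exact hFa|].
      destruct (Req_dec x b) as [->|nb]; [exact hFb|].
      apply ex_derive_continuous. eexists. apply hF; lra.
  - rewrite RInt_point in E. unfold zero in E; simpl in E. lra.
Qed.

Ltac fixpow := repeat match goal with |- context [?y * (?y * 1)] => replace (y*(y*1)) with (y^2) by ring end.
Ltac rsimpl := unfold minus, plus, opp, scal; simpl; unfold mult; simpl; fixpow.

Ltac req := match goal with |- ?a = ?b => change (@eq R a b) end.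

Lemma cont_of_deriv (f : R -> R) (s : R) : ex_derive f s -> continuous f s.
Proof. intros h. exact (ex_derive_continuous f s h). Qed.

Lemma is_derive_eq (f : R -> R) x l l' : is_derive f x l -> l = l' -> is_derive f x l'.
Proof. intros h ->; exact h. Qed.

Lemma acos_deriv x : -1 < x < 1 -> is_derive acos x (-1 / sqrt (1 - x ^ 2)).
Proof.
  intros hx. apply is_derive_Reals.
  apply (derive_pt_eq_1 _ _ _ (derivable_pt_acos x hx)).
  rewrite derive_pt_acos. unfold Rsqr. f_equal. f_equal. ring.
Qed.

Lemma sqrt_pos1 x : -1 < x < 1 -> 0 < sqrt (1 - x ^ 2).
Proof. intros hx. apply sqrt_lt_R0. assert (0 < (1 - x) * (1 + x)) by (apply Rmult_lt_0_compat; lra). nra. Qed.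

Definition g (K s : R) := sin (K * acos s).

Lemma g_cont K s : continuous (g K) s.
Proof.
  unfold g. apply continuous_sin_comp.
  apply (continuous_scal_r K acos s). apply acos_cont.
Qed.

Lemma sin_acos_deriv c x : -1 < x < 1 ->
  is_derive (fun s => sin (c * acos s)) x (- c * cos (c * acos x) / sqrt (1 - x ^ 2)).
Proof.
  intros hx. pose proof (sqrt_pos1 x hx). assert (sqrt (1 - x*(x*1)) > 0) by (replace (x*(x*1)) with (x^2) by ring; lra).
  eapply is_derive_eq.
  - apply (is_derive_comp sin (fun s => c * acos s)). apply is_derive_sin.
    apply is_derive_scal. apply acos_deriv; exact hx.
  - unfold scal; simpl; unfold mult; simpl. field. lra.
Qed.

Lemma cos_acos_deriv c x : -1 < x < 1 ->
  is_derive (fun s => cos (c * acos s)) x (c * sin (c * acos x) / sqrt (1 - x ^ 2)).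
Proof.
  intros hx. pose proof (sqrt_pos1 x hx). assert (sqrt (1 - x*(x*1)) > 0) by (replace (x*(x*1)) with (x^2) by ring; lra).
  eapply is_derive_eq.
  - apply (is_derive_comp cos (fun s => c * acos s)). apply is_derive_cos.
    apply is_derive_scal. apply acos_deriv; exact hx.
  - unfold scal; simpl; unfold mult; simpl. field. lra.
Qed.

Lemma acos_m1 : acos (-1) = PI.
Proof. unfold acos. destruct (Rle_dec (-1) (-1)); [reflexivity|lra]. Qed.

Lemma sin_INR_PI j : sin (INR j * PI) = 0.
Proof. apply sin_eq_0_1. exists (Z.of_nat j). rewrite <- INR_IZR_INZ. reflexivity. Qed.

Lemma sin_acos' x : -1 <= x <= 1 -> sin (acos x) = sqrt (1 - x ^ 2).
Proof. intros h. rewrite sin_acos by exact h. unfold Rsqr. f_equal. ring. Qed.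

Lemma sqrt_sq1 x : -1 <= x <= 1 -> sqrt (1 - x ^ 2) * sqrt (1 - x ^ 2) = 1 - x ^ 2.
Proof.
  intros h. apply sqrt_sqrt.
  assert (0 <= (1 - x) * (1 + x)) by (apply Rmult_le_pos; lra). nra.
Qed.

Lemma M1 : RInt (g 1) (-1) 1 = PI / 2.
Proof.
  rewrite (ftc_end (g 1) (fun s => /4 * sin (2 * acos s) - /2 * acos s) (-1) 1 1); try lra.
  - rewrite acos_1, acos_m1, Rmult_0_r, sin_0, sin_2PI. match goal with |- ?a = ?b => change (@eq R a b) end. field.
  - intros; apply g_cont.
  - intros x hx. pose proof (sqrt_pos1 x hx).
    eapply is_derive_eq.
    + apply (is_derive_minus (fun s => /4 * sin (2 * acos s)) (fun s => /2 * acos s)).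
      * apply is_derive_scal. apply sin_acos_deriv; exact hx.
      * apply is_derive_scal. apply acos_deriv; exact hx.
    + unfold g; rsimpl.
      rewrite Rmult_1_l. rewrite cos_2a_sin. rewrite sin_acos' by lra.
      pose proof (sqrt_sq1 x ltac:(lra)). field. lra.
  - apply (continuous_minus (fun s => /4 * sin (2 * acos s)) (fun s => /2 * acos s)).
    + apply (continuous_scal_r (/4) (g 2)), g_cont.
    + apply (continuous_scal_r (/2) acos), acos_cont.
  - apply (continuous_minus (fun s => /4 * sin (2 * acos s)) (fun s => /2 * acos s)).
    + apply (continuous_scal_r (/4) (g 2)), g_cont.
    + apply (continuous_scal_r (/2) acos), acos_cont.
Qed.

Lemma Mk K : K - 1 <> 0 -> K + 1 <> 0 -> sin ((K + 1) * PI) = 0 -> sin ((K - 1) * PI) = 0 ->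
  RInt (g K) (-1) 1 = 0.
Proof.
  intros h1 h2 h3 h4.
  rewrite (ftc_end (g K) (fun s => /(2*(K+1)) * sin ((K+1) * acos s) - /(2*(K-1)) * sin ((K-1) * acos s)) (-1) 1 1); try lra.
  - rewrite acos_1, acos_m1, !Rmult_0_r, sin_0, h3, h4.
    match goal with |- ?a = ?b => change (@eq R a b) end. ring.
  - intros; apply g_cont.
  - intros x hx. pose proof (sqrt_pos1 x hx).
    eapply is_derive_eq.
    + apply (is_derive_minus (fun s => /(2*(K+1)) * sin ((K+1) * acos s)) (fun s => /(2*(K-1)) * sin ((K-1) * acos s))).
      * apply is_derive_scal. apply sin_acos_deriv; exact hx.
      * apply is_derive_scal. apply sin_acos_deriv; exact hx.
    + unfold g; rsimpl.
      replace ((K + 1) * acos x) with (K * acos x + acos x) by ring.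
      replace ((K - 1) * acos x) with (K * acos x - acos x) by ring.
      rewrite cos_plus, cos_minus, sin_acos' by lra.
      field. lra.
  - apply (continuous_minus (fun s => /(2*(K+1)) * sin ((K+1) * acos s)) (fun s => /(2*(K-1)) * sin ((K-1) * acos s))).
    + apply (continuous_scal_r _ (g (K+1))), g_cont.
    + apply (continuous_scal_r _ (g (K-1))), g_cont.
  - apply (continuous_minus (fun s => /(2*(K+1)) * sin ((K+1) * acos s)) (fun s => /(2*(K-1)) * sin ((K-1) * acos s))).
    + apply (continuous_scal_r _ (g (K+1))), g_cont.
    + apply (continuous_scal_r _ (g (K-1))), g_cont.
Qed.

Lemma Mk_nat k : (2 <= k)%nat -> RInt (g (INR k)) (-1) 1 = 0.
Proof.
  intros hk. apply Mk.
  - apply Rgt_not_eq. apply le_INR in hk. simpl in hk. lra.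
  - apply Rgt_not_eq. apply le_INR in hk. simpl in hk. lra.
  - rewrite <- S_INR. apply sin_INR_PI.
  - destruct k as [|k]; [lia|]. rewrite S_INR. replace (INR k + 1 - 1) with (INR k) by ring. apply sin_INR_PI.
Qed.

Definition pvp (f : R -> R) x e :=
  RInt (fun s => f s / (s - x)) (-1) (x - Rabs e) + RInt (fun s => f s / (s - x)) (x + Rabs e) 1.

Definition ipart (f : R -> R) x e := RInt f (-1) (x - Rabs e) + RInt f (x + Rabs e) 1.

Definition good_e x e := e <> 0 /\ -1 < x - Rabs e /\ x + Rabs e < 1.

Lemma near0 x : -1 < x < 1 -> Rbar_locally' (Finite 0) (good_e x).
Proof.
  intros hx. simpl. unfold locally', within, locally.
  assert (hp : 0 < Rmin (1 + x) (1 - x)) by (apply Rmin_glb_lt; lra).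
  exists (mkposreal _ hp). intros y hy hy0. simpl in hy.
  unfold ball in hy; simpl in hy; unfold AbsRing_ball, abs, minus, plus, opp in hy; simpl in hy.
  rewrite Ropp_0, Rplus_0_r in hy.
  pose proof (Rmin_l (1 + x) (1 - x)). pose proof (Rmin_r (1 + x) (1 - x)).
  split; [exact hy0|]. lra.
Qed.

Lemma cont_div (f : R -> R) x s : continuous f s -> s <> x -> continuous (fun t => f t / (t - x)) s.
Proof.
  intros hf hs. apply (continuous_mult f (fun t => / (t - x))); [exact hf|].
  apply continuous_Rinv_comp; [|lra].
  apply (continuous_minus (fun t => t) (fun _ => x)); [apply continuous_id|apply continuous_const].
Qed.

Lemma exRI (f : R -> R) a b : (forall z, Rmin a b <= z <= Rmax a b -> continuous f z) -> ex_RInt f a b.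
Proof. apply (@ex_RInt_continuous R_CompleteNormedModule). Qed.

Lemma RInt_lin3 (u v w : R -> R) al be ga a b :
  ex_RInt u a b -> ex_RInt v a b -> ex_RInt w a b ->
  RInt (fun s => al * u s + be * v s + ga * w s) a b
  = al * RInt u a b + be * RInt v a b + ga * RInt w a b.
Proof.
  intros hu hv hw.
  assert (E1 := @RInt_scal R_CompleteNormedModule u a b al hu).
  assert (E2 := @RInt_scal R_CompleteNormedModule v a b be hv).
  assert (E3 := @RInt_scal R_CompleteNormedModule w a b ga hw).
  assert (hu' : ex_RInt (fun s => scal al (u s)) a b) by (apply (@ex_RInt_scal R_NormedModule); exact hu).
  assert (hv' : ex_RInt (fun s => scal be (v s)) a b) by (apply (@ex_RInt_scal R_NormedModule); exact hv).
  assert (hw' : ex_RInt (fun s => scal ga (w s)) a b) by (apply (@ex_RInt_scal R_NormedModule); exact hw).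
  assert (E4 := @RInt_plus R_CompleteNormedModule _ _ a b hu' hv').
  assert (h4 : ex_RInt (fun s => plus (scal al (u s)) (scal be (v s))) a b) by (apply (@ex_RInt_plus R_NormedModule); assumption).
  assert (E5 := @RInt_plus R_CompleteNormedModule _ _ a b h4 hw').
  etransitivity; [exact E5|].
  etransitivity. { apply (f_equal2 plus). { etransitivity; [exact E4|]. apply (f_equal2 plus); [exact E1|exact E2]. } exact E3. }
  reflexivity.
Qed.

Lemma g_rec K s : -1 <= s <= 1 -> g (K + 1) s = 2 * s * g K s - g (K - 1) s.
Proof.
  intros hs. unfold g.
  replace ((K + 1) * acos s) with (K * acos s + acos s) by ring.
  replace ((K - 1) * acos s) with (K * acos s - acos s) by ring.
  rewrite sin_plus, sin_minus, cos_acos by exact hs. ring.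
Qed.

Lemma ex_left (f : R -> R) x e : good_e x e -> (forall z, continuous f z) ->
  ex_RInt (fun s => f s / (s - x)) (-1) (x - Rabs e).
Proof.
  intros [he [h1 h2]] hf. apply exRI. rewrite Rmin_left, Rmax_right by lra.
  intros z hz. apply cont_div; [apply hf|]. pose proof (Rabs_pos_lt e he). lra.
Qed.

Lemma ex_right (f : R -> R) x e : good_e x e -> (forall z, continuous f z) ->
  ex_RInt (fun s => f s / (s - x)) (x + Rabs e) 1.
Proof.
  intros [he [h1 h2]] hf. apply exRI. rewrite Rmin_left, Rmax_right by lra.
  intros z hz. apply cont_div; [apply hf|]. pose proof (Rabs_pos_lt e he). lra.
Qed.

Lemma ex_any (f : R -> R) a b : (forall z, continuous f z) -> ex_RInt f a b.
Proof. intros hf. apply exRI. intros; apply hf. Qed.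

Lemma pvp_rec K x e : -1 < x < 1 -> good_e x e ->
  pvp (g (K + 1)) x e = 2 * ipart (g K) x e + 2 * x * pvp (g K) x e - pvp (g (K - 1)) x e.
Proof.
  intros hx he. unfold pvp, ipart.
  destruct he as [he0 [h1 h2]] eqn:HE. pose proof (Rabs_pos_lt e he0).
  rewrite (RInt_ext (fun s => g (K + 1) s / (s - x)) (fun s => 2 * g K s + (2 * x) * (g K s / (s - x)) + (-1) * (g (K - 1) s / (s - x))) (-1)).
  2:{ rewrite Rmin_left, Rmax_right by lra. intros s hs. rewrite g_rec by lra. req. field. lra. }
  rewrite (RInt_ext (fun s => g (K + 1) s / (s - x)) (fun s => 2 * g K s + (2 * x) * (g K s / (s - x)) + (-1) * (g (K - 1) s / (s - x))) (x + Rabs e)).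
  2:{ rewrite Rmin_left, Rmax_right by lra. intros s hs. rewrite g_rec by lra. req. field. lra. }
  rewrite !RInt_lin3.
  - req. ring.
  - apply ex_any, g_cont.
  - apply ex_right; [exact he|apply g_cont].
  - apply ex_right; [exact he|apply g_cont].
  - apply ex_any, g_cont.
  - apply ex_left; [exact he|apply g_cont].
  - apply ex_left; [exact he|apply g_cont].
Qed.

Lemma is_lim_eqv (f : R -> R) x a b : is_lim f x (Finite a) -> a = b -> is_lim f x (Finite b).
Proof. intros h <-; exact h. Qed.

Lemma Phi_deriv (f : R -> R) a t : (forall z, continuous f z) -> is_derive (RInt f a) t (f t).
Proof.
  intros hf. apply (@is_derive_RInt R_NormedModule f (RInt f a) a t); [|apply hf].
  apply filter_forall. intros y. apply (@RInt_correct R_CompleteNormedModule). apply ex_any, hf.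
Qed.

Lemma Phi_cont (f : R -> R) a t : (forall z, continuous f z) -> continuous (RInt f a) t.
Proof. intros hf. exact (ex_derive_continuous (RInt f a) t (ex_intro _ (f t) (Phi_deriv f a t hf))). Qed.

Lemma cont_xmabs x : forall e, continuous (fun e => x - Rabs e) e.
Proof.
  intros e. apply (continuous_minus (fun _ => x) Rabs); [apply continuous_const|apply continuous_Rabs].
Qed.

Lemma cont_xpabs x : forall e, continuous (fun e => x + Rabs e) e.
Proof.
  intros e. apply (continuous_plus (fun _ => x) Rabs); [apply continuous_const|apply continuous_Rabs].
Qed.

Lemma ipart_lim (f : R -> R) x : (forall z, continuous f z) -> is_lim (ipart f x) 0 (RInt f (-1) 1).
Proof.
  intros hf.
  set (h := fun e => RInt f (-1) (x - Rabs e) + RInt f (-1) 1 - RInt f (-1) (x + Rabs e)).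
  apply (is_lim_ext h).
  { intros e. unfold h, ipart.
    assert (E := @RInt_Chasles R_CompleteNormedModule f (-1) (x + Rabs e) 1 (ex_any _ _ _ hf) (ex_any _ _ _ hf)).
    rewrite <- E. unfold plus; simpl. ring. }
  apply (is_lim_eqv _ _ (h 0)).
  - apply is_lim_continuity. apply cont_iff. unfold h.
    apply (continuous_minus (fun e => RInt f (-1) (x - Rabs e) + RInt f (-1) 1) (fun e => RInt f (-1) (x + Rabs e))).
    + apply (continuous_plus (fun e => RInt f (-1) (x - Rabs e)) (fun _ => RInt f (-1) 1)); [|apply continuous_const].
      apply (continuous_comp (fun e => x - Rabs e) (RInt f (-1))); [apply cont_xmabs|apply Phi_cont, hf].
    + apply (continuous_comp (fun e => x + Rabs e) (RInt f (-1))); [apply cont_xpabs|apply Phi_cont, hf].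
  - unfold h. rewrite Rabs_R0, Rminus_0_r, Rplus_0_r. ring.
Qed.

Lemma is_lim_lin (f h : R -> R) x a b c d : is_lim f x (Finite a) -> is_lim h x (Finite b) ->
  is_lim (fun e => c * f e + d * h e) x (Finite (c * a + d * b)).
Proof.
  intros ha hb. apply (is_lim_plus' (fun e => c * f e) (fun e => d * h e)).
  - apply (is_lim_scal_l f c x a ha).
  - apply (is_lim_scal_l h d x b hb).
Qed.

Lemma pv_rec_lim K x (L0 L1 : R) : -1 < x < 1 ->
  is_lim (pvp (g (K - 1)) x) 0 L0 -> is_lim (pvp (g K) x) 0 L1 ->
  is_lim (pvp (g (K + 1)) x) 0 (2 * RInt (g K) (-1) 1 + 2 * x * L1 - L0).
Proof.
  intros hx h0 h1.
  apply (is_lim_ext_loc (fun e => 1 * (2 * ipart (g K) x e + 2 * x * pvp (g K) x e) + (-1) * pvp (g (K - 1)) x e)).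
  { apply (filter_imp (good_e x)); [|apply near0, hx].
    intros e he. rewrite pvp_rec by assumption. ring. }
  apply (is_lim_eqv _ _ (1 * (2 * RInt (g K) (-1) 1 + 2 * x * L1) + (-1) * L0)); [|ring].
  apply is_lim_lin; [|exact h0].
  apply is_lim_lin; [apply ipart_lim, g_cont|exact h1].
Qed.

Definition wf (s : R) := sqrt (1 - s ^ 2).
Definition Nf x s := 1 - x * s + wf x * wf s.
Definition phi x s := wf s + x * acos s - wf x * ln (Nf x s).

Lemma wf_nonneg s : 0 <= wf s.
Proof. apply sqrt_pos. Qed.

Lemma wf_sq s : -1 <= s <= 1 -> wf s * wf s = 1 - s ^ 2.
Proof. apply sqrt_sq1. Qed.

Lemma Nf_pos x s : -1 < x < 1 -> -1 <= s <= 1 -> 0 < Nf x s.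
Proof.
  intros hx hs. unfold Nf. pose proof (wf_nonneg x). pose proof (wf_nonneg s).
  assert (0 <= wf x * wf s) by (apply Rmult_le_pos; lra).
  assert (x * s < 1).
  { destruct (Rle_dec 0 x).
    - assert (x * s <= x * 1) by (apply Rmult_le_compat_l; lra). lra.
    - assert (x * s <= x * (-1)) by (apply Rmult_le_compat_neg_l; lra). lra. }
  lra.
Qed.

Lemma wf_cont s : continuous wf s.
Proof.
  unfold wf. apply continuous_sqrt_comp.
  apply (continuous_minus (fun _ => 1) (fun s => s ^ 2)); [apply continuous_const|].
  apply ex_derive_continuous. auto_derive. exact I.
Qed.

Lemma wf_deriv s : -1 < s < 1 -> is_derive wf s (- s / wf s).
Proof.
  intros hs. pose proof (sqrt_pos1 s hs).
  unfold wf. eapply is_derive_eq.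
  - apply (is_derive_sqrt (fun s => 1 - s ^ 2)).
    + auto_derive; [exact I|]. reflexivity.
    + assert (0 < (1 - s) * (1 + s)) by (apply Rmult_lt_0_compat; lra). nra.
  - req. field. lra.
Qed.

Lemma Nf_deriv x s : -1 < s < 1 -> is_derive (Nf x) s (- x + wf x * (- s / wf s)).
Proof.
  intros hs. unfold Nf. eapply is_derive_eq.
  - apply (is_derive_plus (fun s => 1 - x * s) (fun s => wf x * wf s)).
    + auto_derive; [exact I|]. reflexivity.
    + apply is_derive_scal. apply wf_deriv, hs.
  - rsimpl. ring.
Qed.

Lemma ln_comp_deriv (h : R -> R) (s d : R) : is_derive h s d -> 0 < h s -> is_derive (fun t => ln (h t)) s (d / h s).
Proof.
  intros hd hp. eapply is_derive_eq.
  - apply (is_derive_comp ln h). apply is_derive_ln, hp. exact hd.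
  - rsimpl. req. field. lra.
Qed.

Definition dphi x s := - s / wf s - x / wf s - wf x * ((- x + wf x * (- s / wf s)) / Nf x s).

Lemma phi_deriv x s : -1 < x < 1 -> -1 < s < 1 -> is_derive (phi x) s (dphi x s).
Proof.
  intros hx hs. pose proof (sqrt_pos1 s hs). unfold phi, dphi.
  eapply is_derive_eq.
  - apply (is_derive_minus (fun s => wf s + x * acos s) (fun s => wf x * ln (Nf x s))).
    + apply (is_derive_plus wf (fun s => x * acos s)).
      * apply wf_deriv, hs.
      * apply is_derive_scal, acos_deriv, hs.
    + apply is_derive_scal. apply ln_comp_deriv; [apply Nf_deriv, hs| apply Nf_pos; lra].
  - rsimpl. unfold wf. req. field. split; [lra|].
    pose proof (Nf_pos x s hx ltac:(lra)). lra.
Qed.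

Lemma key_id x s : -1 < x < 1 -> -1 < s < 1 -> s <> x ->
  dphi x s + wf x / (s - x) = wf s / (s - x).
Proof.
  intros hx hs hsx. unfold dphi.
  pose proof (Nf_pos x s hx ltac:(lra)) as HN.
  pose proof (sqrt_pos1 s hs) as Hw0. fold (wf s) in Hw0.
  pose proof (wf_sq s ltac:(lra)) as Hw. pose proof (wf_sq x ltac:(lra)) as Ha.
  assert (HNd : Nf x s = 1 - x * s + wf x * wf s) by reflexivity.
  set (w := wf s) in *. set (a := wf x) in *. set (N := Nf x s) in *.
  assert (key : (x * w + a * s) * (s - x) + w * N = a * N).
  { rewrite HNd.
    assert (E : (x * w + a * s) * (s - x) + w * (1 - x * s + a * w) - a * (1 - x * s + a * w)
              = a * (w * w - (1 - s ^ 2)) - w * (a * a - (1 - x ^ 2))) by ring.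
    rewrite Hw, Ha in E. lra. }
  assert (hsx' : s - x <> 0) by lra.
  transitivity ((- (s + x) * (s - x) * N + a * ((x * w + a * s) * (s - x) + w * N)) / (w * N * (s - x))).
  { field. lra. }
  rewrite key.
  transitivity (N * (w * w) / (w * N * (s - x))).
  { f_equal. rewrite Hw. transitivity (- (s + x) * (s - x) * N + (a * a) * N); [ring|]. rewrite Ha. ring. }
  field. lra.
Qed.

Definition G1 x s := phi x s + wf x * ln (x - s).
Definition G2 x s := phi x s + wf x * ln (s - x).

Lemma g1_eq s : -1 <= s <= 1 -> g 1 s = wf s.
Proof. intros hs. unfold g. rewrite Rmult_1_l, sin_acos' by exact hs. reflexivity. Qed.

Lemma G1_deriv x s : -1 < x < 1 -> -1 < s < x -> is_derive (G1 x) s (g 1 s / (s - x)).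
Proof.
  intros hx hs. unfold G1. eapply is_derive_eq.
  - apply (is_derive_plus (phi x) (fun s => wf x * ln (x - s))).
    + apply phi_deriv; lra.
    + apply is_derive_scal. apply (ln_comp_deriv (fun t => x - t)); [|lra].
      auto_derive; [exact I|]. reflexivity.
  - rsimpl. rewrite g1_eq by lra. rewrite <- key_id by lra. req. field. lra.
Qed.

Lemma G2_deriv x s : -1 < x < 1 -> x < s < 1 -> is_derive (G2 x) s (g 1 s / (s - x)).
Proof.
  intros hx hs. unfold G2. eapply is_derive_eq.
  - apply (is_derive_plus (phi x) (fun s => wf x * ln (s - x))).
    + apply phi_deriv; lra.
    + apply is_derive_scal. apply (ln_comp_deriv (fun t => t - x)); [|lra].
      auto_derive; [exact I|]. reflexivity.
  - rsimpl. rewrite g1_eq by lra. rewrite <- key_id by lra. req. field. lra.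
Qed.

Lemma Nf_cont x s : continuous (Nf x) s.
Proof.
  unfold Nf. apply (continuous_plus (fun s => 1 - x * s) (fun s => wf x * wf s)).
  - apply ex_derive_continuous. auto_derive. exact I.
  - apply (continuous_scal_r (wf x) wf). apply wf_cont.
Qed.

Lemma phi_cont x s : -1 < x < 1 -> -1 <= s <= 1 -> continuous (phi x) s.
Proof.
  intros hx hs. unfold phi.
  apply (continuous_minus (fun s => wf s + x * acos s) (fun s => wf x * ln (Nf x s))).
  - apply (continuous_plus wf (fun s => x * acos s)); [apply wf_cont|].
    apply (continuous_scal_r x acos). apply acos_cont.
  - apply (continuous_scal_r (wf x) (fun s => ln (Nf x s))).
    apply (continuous_comp (Nf x) ln); [apply Nf_cont|].
    apply continuous_ln. apply Nf_pos; lra.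
Qed.

Lemma lnlin_cont (c d s : R) : 0 < c * s + d -> continuous (fun t => ln (c * t + d)) s.
Proof.
  intros h. apply (continuous_comp (fun t => c * t + d) ln).
  - apply cont_of_deriv. auto_derive. exact I.
  - apply continuous_ln, h.
Qed.

Lemma G1_cont x s : -1 < x < 1 -> -1 <= s < x -> continuous (G1 x) s.
Proof.
  intros hx hs. unfold G1.
  apply (continuous_plus (phi x) (fun s => wf x * ln (x - s))); [apply phi_cont; lra|].
  apply (continuous_scal_r (wf x) (fun s => ln (x - s))).
  apply (continuous_ext_loc _ (fun t => ln ((-1) * t + x))).
  { apply filter_forall. intros t. f_equal. ring. }
  apply lnlin_cont. lra.
Qed.

Lemma G2_cont x s : -1 < x < 1 -> x < s <= 1 -> continuous (G2 x) s.
Proof.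
  intros hx hs. unfold G2.
  apply (continuous_plus (phi x) (fun s => wf x * ln (s - x))); [apply phi_cont; lra|].
  apply (continuous_scal_r (wf x) (fun s => ln (s - x))).
  apply (continuous_ext_loc _ (fun t => ln (1 * t + (- x)))).
  { apply filter_forall. intros t. f_equal. ring. }
  apply lnlin_cont. lra.
Qed.

Lemma wf_m1 : wf (-1) = 0.
Proof. unfold wf. replace (1 - (-1) ^ 2) with 0 by ring. apply sqrt_0. Qed.
Lemma wf_1 : wf 1 = 0.
Proof. unfold wf. replace (1 - 1 ^ 2) with 0 by ring. apply sqrt_0. Qed.

Lemma pvp1_eq x e : -1 < x < 1 -> good_e x e ->
  pvp (g 1) x e = phi x (x - Rabs e) - phi x (x + Rabs e) - x * PI.
Proof.
  intros hx he. destruct he as [he0 [h1 h2]] eqn:HE. pose proof (Rabs_pos_lt e he0) as hp.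
  unfold pvp.
  rewrite (ftc_end (fun s => g 1 s / (s - x)) (G1 x) (-1) (x - Rabs e) (Rabs e / 2)); try lra.
  2:{ intros z hz. apply cont_div; [apply g_cont|lra]. }
  2:{ intros z hz. apply G1_deriv; lra. }
  2:{ apply G1_cont; lra. }
  2:{ apply G1_cont; lra. }
  rewrite (ftc_end (fun s => g 1 s / (s - x)) (G2 x) (x + Rabs e) 1 (Rabs e / 2)); try lra.
  2:{ intros z hz. apply cont_div; [apply g_cont|lra]. }
  2:{ intros z hz. apply G2_deriv; lra. }
  2:{ apply G2_cont; lra. }
  2:{ apply G2_cont; lra. }
  unfold G1, G2, phi at 2 3, Nf.
  rewrite wf_m1, wf_1, acos_m1, acos_1.
  replace (x - (x - Rabs e)) with (Rabs e) by ring.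
  replace (x + Rabs e - x) with (Rabs e) by ring.
  replace (1 - x * -1 + wf x * 0) with (x - -1) by ring.
  replace (1 - x * 1 + wf x * 0) with (1 - x) by ring.
  req. ring.
Qed.

Lemma pv1_lim x : -1 < x < 1 -> is_lim (pvp (g 1) x) 0 (- PI * x).
Proof.
  intros hx.
  apply (is_lim_ext_loc (fun e => phi x (x - Rabs e) - phi x (x + Rabs e) - x * PI)).
  { apply (filter_imp (good_e x)); [|apply near0, hx].
    intros e he. rewrite pvp1_eq by assumption. reflexivity. }
  set (h := fun e => phi x (x - Rabs e) - phi x (x + Rabs e) - x * PI).
  apply (is_lim_eqv _ _ (h 0)).
  - apply is_lim_continuity. apply cont_iff. unfold h.
    apply (continuous_minus (fun e => phi x (x - Rabs e) - phi x (x + Rabs e)) (fun _ => x * PI)); [|apply continuous_const].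
    apply (continuous_minus (fun e => phi x (x - Rabs e)) (fun e => phi x (x + Rabs e))).
    + apply (continuous_comp (fun e => x - Rabs e) (phi x)); [apply cont_xmabs|].
      rewrite Rabs_R0, Rminus_0_r. apply phi_cont; lra.
    + apply (continuous_comp (fun e => x + Rabs e) (phi x)); [apply cont_xpabs|].
      rewrite Rabs_R0, Rplus_0_r. apply phi_cont; lra.
  - unfold h. rewrite Rabs_R0, Rminus_0_r, Rplus_0_r. ring.
Qed.

Lemma pv0_lim x : is_lim (pvp (g 0) x) 0 0.
Proof.
  apply (is_lim_ext (fun _ => 0)).
  { intros e. unfold pvp.
    rewrite (RInt_ext (fun s => g 0 s / (s - x)) (fun _ => 0) (-1)).
    2:{ intros; unfold g. rewrite Rmult_0_l, sin_0. req. unfold Rdiv. ring. }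
    rewrite (RInt_ext (fun s => g 0 s / (s - x)) (fun _ => 0) (x + Rabs e)).
    2:{ intros; unfold g. rewrite Rmult_0_l, sin_0. req. unfold Rdiv. ring. }
    rewrite !RInt_const. rsimpl. req. ring. }
  apply is_lim_const.
Qed.

Definition claim k := forall x, -1 < x < 1 -> is_lim (pvp (g (INR k)) x) 0 (- PI * cos (INR k * acos x)).

Lemma claim_all k : claim (S k) /\ claim (S (S k)).
Proof.
  induction k as [|k [IH1 IH2]].
  - split.
    + intros x hx. simpl INR. rewrite Rmult_1_l, cos_acos by lra. apply pv1_lim, hx.
    + intros x hx. replace (INR 2) with (1 + 1) by (simpl; ring).
      apply (is_lim_eqv _ _ (2 * RInt (g 1) (-1) 1 + 2 * x * (- PI * x) - 0)).
      * apply pv_rec_lim; [exact hx| |].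
        -- replace (1 - 1) with 0 by ring. apply pv0_lim.
        -- apply pv1_lim, hx.
      * rewrite M1. replace ((1 + 1) * acos x) with (2 * acos x) by ring.
        rewrite cos_2a_cos, cos_acos by lra. req. field.
  - split; [exact IH2|].
    intros x hx.
    replace (INR (S (S (S k)))) with (INR (S (S k)) + 1) by (rewrite (S_INR (S (S k))); ring).
    apply (is_lim_eqv _ _ (2 * RInt (g (INR (S (S k)))) (-1) 1 + 2 * x * (- PI * cos (INR (S (S k)) * acos x))
                          - (- PI * cos (INR (S k) * acos x)))).
    + apply pv_rec_lim; [exact hx| |apply IH2, hx].
      replace (INR (S (S k)) - 1) with (INR (S k)) by (rewrite (S_INR (S k)); ring). apply IH1, hx.
    + rewrite Mk_nat by lia.
      set (K := INR (S (S k))). replace (INR (S k)) with (K - 1) by (unfold K; rewrite (S_INR (S k)); ring).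
      replace ((K + 1) * acos x) with (K * acos x + acos x) by ring.
      replace ((K - 1) * acos x) with (K * acos x - acos x) by ring.
      rewrite cos_plus, cos_minus. rewrite cos_acos by lra. req. ring.
Qed.

Fixpoint Cb (n k : nat) : R :=
  match n, k with
  | _, O => 1
  | O, S _ => 0
  | S n', S k' => Cb n' k' + Cb n' (S k')
  end.

Lemma Cb_big n k : (n < k)%nat -> Cb n k = 0.
Proof.
  revert k; induction n as [|n IH]; intros k hk.
  - destruct k; [lia|reflexivity].
  - destruct k as [|k]; [lia|]. simpl. rewrite !IH by lia. ring.
Qed.

Lemma C_nn n : Binomial.C n n = 1.
Proof. rewrite pascal_step1 by lia. rewrite Nat.sub_diag. apply C_n_0. Qed.

Lemma Cb_C n k : (k <= n)%nat -> Cb n k = Binomial.C n k.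
Proof.
  revert k; induction n as [|n IH]; intros k hk.
  - destruct k; [|lia]. simpl. rewrite C_n_0. reflexivity.
  - destruct k as [|k]; [simpl; rewrite C_n_0; reflexivity|].
    simpl. destruct (Nat.eq_dec k n) as [->|hne].
    + rewrite (Cb_big n (S n)) by lia. rewrite IH by lia. rewrite !C_nn. ring.
    + rewrite !IH by lia. apply pascal. lia.
Qed.

Lemma sum_shift M (F : nat -> R) :
  sum_f_R0 (fun i => Cb M (S i) * F (S i)) M = sum_f_R0 (fun j => Cb M j * F j) M - F O.
Proof.
  assert (E1 := decomp_sum (fun j => Cb M j * F j) (S M) ltac:(lia)).
  rewrite tech5 in E1. simpl pred in E1. cbv beta in E1. rewrite (Cb_big M (S M)) in E1 by lia.
  assert (Cb M 0 = 1) by (destruct M; reflexivity).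
  rewrite H in E1. lra.
Qed.

Lemma sum_pascal M (F : nat -> R) :
  sum_f_R0 (fun j => Cb (S M) j * F j) (S M) = sum_f_R0 (fun j => Cb M j * (F j + F (S j))) M.
Proof.
  rewrite decomp_sum by lia. simpl pred.
  transitivity (F O + (sum_f_R0 (fun i => Cb M i * F (S i)) M + sum_f_R0 (fun i => Cb M (S i) * F (S i)) M)).
  { simpl Cb at 1. f_equal; [ring|]. rewrite <- sum_plus. apply sum_eq. intros i hi. simpl. ring. }
  rewrite sum_shift.
  transitivity (sum_f_R0 (fun j => Cb M j * F j) M + sum_f_R0 (fun i => Cb M i * F (S i)) M); [ring|].
  rewrite <- sum_plus. apply sum_eq. intros i hi. ring.
Qed.

Definition A (M : nat) (th y : R) :=
  sum_f_R0 (fun j => Cb M j * ((-1) ^ j * sin (y + (2 * INR j - INR M) * th))) M.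

Lemma A_step M th y : A (S M) th y = A M th (y - th) - A M th (y + th).
Proof.
  unfold A. rewrite sum_pascal.
  rewrite <- minus_sum. apply sum_eq. intros j hj.
  rewrite !S_INR. simpl pow.
  replace (y + (2 * INR j - (INR M + 1)) * th) with (y - th + (2 * INR j - INR M) * th) by ring.
  replace (y + (2 * (INR j + 1) - (INR M + 1)) * th) with (y + th + (2 * INR j - INR M) * th) by ring.
  ring.
Qed.

Lemma A_even L th y : A (2 * L) th y = (-4) ^ L * sin th ^ (2 * L) * sin y.
Proof.
  revert y; induction L as [|L IH]; intros y.
  - unfold A. simpl. replace (y + (2 * 0 - 0) * th) with y by ring. ring.
  - replace (2 * S L)%nat with (S (S (2 * L))) by lia.
    rewrite !A_step, !IH.
    replace (y - th - th) with (y - 2 * th) by ring.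
    replace (y - th + th) with y by ring.
    replace (y + th - th) with y by ring.
    replace (y + th + th) with (y + 2 * th) by ring.
    rewrite sin_minus, sin_plus, sin_2a, cos_2a_sin.
    replace (S (S (2 * L))) with (2 * L + 2)%nat by lia. rewrite pow_add. simpl pow. ring.
Qed.


Lemma pvp_lin2 (u v : R -> R) a b x e : (forall z, continuous u z) -> (forall z, continuous v z) ->
  good_e x e -> pvp (fun s => a * u s + b * v s) x e = a * pvp u x e + b * pvp v x e.
Proof.
  intros hu hv he. destruct he as [he0 [h1 h2]] eqn:HE. pose proof (Rabs_pos_lt e he0).
  unfold pvp.
  rewrite (RInt_ext (fun s => (a * u s + b * v s) / (s - x)) (fun s => a * (u s / (s - x)) + b * (v s / (s - x)) + 0 * (u s / (s - x))) (-1)).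
  2:{ intros s hs. req. field. rewrite Rmin_left, Rmax_right in hs by lra. lra. }
  rewrite (RInt_ext (fun s => (a * u s + b * v s) / (s - x)) (fun s => a * (u s / (s - x)) + b * (v s / (s - x)) + 0 * (u s / (s - x))) (x + Rabs e)).
  2:{ intros s hs. req. field. rewrite Rmin_left, Rmax_right in hs by lra. lra. }
  rewrite !RInt_lin3.
  - req. ring.
  - apply ex_right; assumption.
  - apply ex_right; assumption.
  - apply ex_right; assumption.
  - apply ex_left; assumption.
  - apply ex_left; assumption.
  - apply ex_left; assumption.
Qed.

Lemma sum_cont N (c : nat -> R) (f : nat -> R -> R) :
  (forall j z, continuous (f j) z) -> forall z, continuous (fun s => sum_f_R0 (fun j => c j * f j s) N) z.
Proof.
  intros hf z. induction N as [|N IH].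
  - simpl. apply (continuous_scal_r (c O) (f O)), hf.
  - simpl. apply (continuous_plus (fun s => sum_f_R0 (fun j => c j * f j s) N) (fun s => c (S N) * f (S N) s)); [exact IH|].
    apply (continuous_scal_r (c (S N)) (f (S N))), hf.
Qed.

Lemma pv_comb N (c : nat -> R) (f : nat -> R -> R) (l : nat -> R) x : -1 < x < 1 ->
  (forall j z, continuous (f j) z) -> (forall j, (j <= N)%nat -> is_lim (pvp (f j) x) 0 (l j)) ->
  is_lim (pvp (fun s => sum_f_R0 (fun j => c j * f j s) N) x) 0 (sum_f_R0 (fun j => c j * l j) N).
Proof.
  intros hx hf hl. induction N as [|N IH].
  - simpl.
    apply (is_lim_ext_loc (fun e => c O * pvp (f O) x e + 0 * pvp (f O) x e)).
    { apply (filter_imp (good_e x)); [|apply near0, hx].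
      intros e he. rewrite <- pvp_lin2 by (try apply hf; exact he). unfold pvp.
      f_equal; apply RInt_ext; intros; req; unfold Rdiv; ring. }
    apply (is_lim_eqv _ _ (c O * l O + 0 * l O)); [|ring].
    apply is_lim_lin; apply hl; lia.
  - simpl.
    apply (is_lim_ext_loc (fun e => 1 * pvp (fun s => sum_f_R0 (fun j => c j * f j s) N) x e + c (S N) * pvp (f (S N)) x e)).
    { apply (filter_imp (good_e x)); [|apply near0, hx].
      intros e he. rewrite <- pvp_lin2 by (try apply hf; try apply sum_cont; try apply hf; exact he). unfold pvp.
      f_equal; apply RInt_ext; intros; req; unfold Rdiv; ring. }
    apply (is_lim_eqv _ _ (1 * sum_f_R0 (fun j => c j * l j) N + c (S N) * l (S N))); [|ring].
    apply is_lim_lin; [apply IH; intros; apply hl; lia|apply hl; lia].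
Qed.

Definition Kj n L j := INR n + 1 + 2 * INR j - 2 * INR L.
Definition cj L j := Cb (2 * L) j * (-1) ^ j.
Definition Dg n L s := / (-4) ^ L * sum_f_R0 (fun j => cj L j * g (Kj n L j) s) (2 * L).
Definition Dorig n m s := chebU n s * ((1 - s ^ 2) ^ (m - 1) * sqrt (1 - s ^ 2)).

Lemma D_eq n L s : -1 < s < 1 -> Dorig n (S L) s = Dg n L s.
Proof.
  intros hs. unfold Dorig, chebU, Dg.
  replace (S L - 1)%nat with L by lia.
  rewrite sin_acos' by lra. pose proof (sqrt_pos1 s hs) as hw.
  pose proof (sqrt_sq1 s ltac:(lra)) as hw2.
  assert (E := A_even L (acos s) (INR (n + 1) * acos s)).
  rewrite sin_acos' in E by lra.
  replace ((1 - s ^ 2) ^ L) with (sqrt (1 - s ^ 2) ^ (2 * L)).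
  2:{ rewrite pow_mult. f_equal. transitivity (sqrt (1 - s ^ 2) * sqrt (1 - s ^ 2)); [ring|exact hw2]. }
  assert (h4 : (-4) ^ L <> 0) by (apply pow_nonzero; lra).
  transitivity (/ (-4) ^ L * A (2 * L) (acos s) (INR (n + 1) * acos s)).
  { rewrite E. field. split; lra. }
  f_equal. unfold A. apply sum_eq. intros j hj. unfold cj, g, Kj.
  replace (INR (n + 1)) with (INR n + 1) by (rewrite plus_INR; simpl; ring).
  replace (INR (2 * L)) with (2 * INR L) by (rewrite mult_INR; simpl; ring).
  replace ((INR n + 1) * acos s + (2 * INR j - 2 * INR L) * acos s) with ((INR n + 1 + 2 * INR j - 2 * INR L) * acos s) by ring.
  req. ring.
Qed.

Definition PVD n L x := / (-4) ^ L * sum_f_R0 (fun j => cj L j * (- PI * cos (Kj n L j * acos x))) (2 * L).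

Lemma Kj_INR n L j : (2 * L <= n)%nat -> Kj n L j = INR (S (n + 2 * j - 2 * L)).
Proof.
  intros h. unfold Kj. rewrite S_INR, minus_INR by lia. rewrite plus_INR, !mult_INR. simpl. ring.
Qed.

Lemma pvD_lim n L x : (2 * S L <= n)%nat -> -1 < x < 1 -> is_lim (pvp (Dorig n (S L)) x) 0 (PVD n L x).
Proof.
  intros hn hx.
  set (S0 := fun s => sum_f_R0 (fun j => cj L j * g (Kj n L j) s) (2 * L)).
  apply (is_lim_ext_loc (fun e => / (-4) ^ L * pvp S0 x e + 0 * pvp S0 x e)).
  { apply (filter_imp (good_e x)); [|apply near0, hx].
    intros e he. rewrite <- pvp_lin2 by (try apply sum_cont; try intros; try apply g_cont; exact he).
    destruct he as [he0 [h1 h2]]. pose proof (Rabs_pos_lt e he0).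
    unfold pvp. f_equal; apply RInt_ext; intros s hs; rewrite Rmin_left, Rmax_right in hs by lra;
      rewrite D_eq by lra; unfold Dg, S0; req; unfold Rdiv; ring. }
  unfold PVD.
  apply (is_lim_eqv _ _ (/ (-4) ^ L * sum_f_R0 (fun j => cj L j * (- PI * cos (Kj n L j * acos x))) (2 * L)
     + 0 * sum_f_R0 (fun j => cj L j * (- PI * cos (Kj n L j * acos x))) (2 * L))); [|ring].
  assert (HS : is_lim (pvp S0 x) 0 (sum_f_R0 (fun j => cj L j * (- PI * cos (Kj n L j * acos x))) (2 * L))).
  { apply (pv_comb (2 * L) (cj L) (fun j => g (Kj n L j)) (fun j => - PI * cos (Kj n L j * acos x))); [exact hx| |].
    - intros; apply g_cont.
    - intros j hj. rewrite Kj_INR by lia. apply (proj1 (claim_all _)), hx. }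
  apply is_lim_lin; exact HS.
Qed.

Lemma is_derive_sumf N (f : nat -> R -> R) (df : nat -> R) x :
  (forall j, (j <= N)%nat -> is_derive (f j) x (df j)) ->
  is_derive (fun y => sum_f_R0 (fun j => f j y) N) x (sum_f_R0 df N).
Proof.
  intros h. induction N as [|N IH].
  - simpl. apply h; lia.
  - simpl. apply (is_derive_plus (fun y => sum_f_R0 (fun j => f j y) N) (f (S N))).
    + apply IH. intros; apply h; lia.
    + apply h; lia.
Qed.

Definition T1 K x := K * sin (K * acos x) / sqrt (1 - x ^ 2).
Definition T2 K x := (K * (- K * cos (K * acos x) / sqrt (1 - x ^ 2)) * sqrt (1 - x ^ 2)
   - K * sin (K * acos x) * (- x / sqrt (1 - x ^ 2))) / sqrt (1 - x ^ 2) ^ 2.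

Lemma T1_deriv K x : -1 < x < 1 -> is_derive (T1 K) x (T2 K x).
Proof.
  intros hx. pose proof (sqrt_pos1 x hx). unfold T1, T2.
  apply (is_derive_div (fun x => K * sin (K * acos x)) (fun x => sqrt (1 - x ^ 2))).
  - apply is_derive_scal, sin_acos_deriv, hx.
  - apply (wf_deriv x hx).
  - lra.
Qed.

Definition PVD1 n L x := / (-4) ^ L * sum_f_R0 (fun j => cj L j * (- PI * T1 (Kj n L j) x)) (2 * L).
Definition PVD2 n L x := / (-4) ^ L * sum_f_R0 (fun j => cj L j * (- PI * T2 (Kj n L j) x)) (2 * L).

Lemma PVD_deriv n L x : -1 < x < 1 -> is_derive (PVD n L) x (PVD1 n L x).
Proof.
  intros hx. unfold PVD, PVD1.
  apply (is_derive_scal (fun y => sum_f_R0 (fun j => cj L j * (- PI * cos (Kj n L j * acos y))) (2 * L))).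
  apply (is_derive_sumf (2 * L) (fun j y => cj L j * (- PI * cos (Kj n L j * acos y)))).
  intros j hj. apply (is_derive_scal (fun y => - PI * cos (Kj n L j * acos y))).
  apply (is_derive_scal (fun y => cos (Kj n L j * acos y))).
  apply cos_acos_deriv, hx.
Qed.

Lemma PVD1_deriv n L x : -1 < x < 1 -> is_derive (PVD1 n L) x (PVD2 n L x).
Proof.
  intros hx. unfold PVD1, PVD2.
  apply (is_derive_scal (fun y => sum_f_R0 (fun j => cj L j * (- PI * T1 (Kj n L j) y)) (2 * L))).
  apply (is_derive_sumf (2 * L) (fun j y => cj L j * (- PI * T1 (Kj n L j) y))).
  intros j hj. apply (is_derive_scal (fun y => - PI * T1 (Kj n L j) y)).
  apply (is_derive_scal (fun y => T1 (Kj n L j) y)).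
  apply T1_deriv, hx.
Qed.

Lemma inv_m1_pow L : / (-1) ^ L = (-1) ^ L.
Proof.
  assert (h : (-1) ^ L * (-1) ^ L = 1).
  { rewrite <- Rpow_mult_distr. replace (-1 * -1) with 1 by ring. apply pow1. }
  assert ((-1) ^ L <> 0) by (apply pow_nonzero; lra).
  field_simplify_eq; [|exact H]. lra.
Qed.

Lemma half_pow L : (1 / 2) ^ (2 * S L) = / 4 * / 4 ^ L.
Proof.
  induction L as [|L IH].
  - simpl. field.
  - replace (2 * S (S L))%nat with (2 + 2 * S L)%nat by lia. rewrite pow_add, IH.
    assert (4 ^ L <> 0) by (apply pow_nonzero; lra). simpl. field. auto.
Qed.

Lemma chebU_eq k r : -1 < r < 1 -> chebU k r = sin (INR (k + 1) * acos r) / sqrt (1 - r ^ 2).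
Proof. intros hr. unfold chebU. rewrite sin_acos' by lra. reflexivity. Qed.

Theorem mainTheorem6 (m n : nat) (r : R) :
  (2 <= m)%nat -> (2 * m <= n)%nat -> Rabs r < 1 ->
  hadamard_fp (fun s => chebU n s * ((1 - s ^ 2) ^ (m - 1) * sqrt (1 - s ^ 2))) 3 r
  = (-1) ^ m * (1 / 2) ^ (2 * m) * (PI / (1 - r ^ 2)) *
    sum_f_R0 (fun j =>
      (-1) ^ j * Binomial.C (2 * m - 2) j *
      (INR n + 3 - 2 * INR m + 2 * INR j) *
      ((INR n + 4 - 2 * INR m + 2 * INR j) * chebU (n + 1 + 2 * j - 2 * m) r
       - (INR n + 2 - 2 * INR m + 2 * INR j) * chebU (n + 3 + 2 * j - 2 * m) r))
      (2 * m - 2).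
Proof.
  intros hm hn hr. destruct m as [|L]; [lia|].
  assert (hr' : -1 < r < 1) by (apply Rabs_def2 in hr; lra).
  set (D := fun s => chebU n s * ((1 - s ^ 2) ^ (S L - 1) * sqrt (1 - s ^ 2))).
  assert (H1 : forall x, -1 < x < 1 -> cauchy_pv D x = PVD n L x).
  { intros x hx. unfold cauchy_pv.
    change (real (Lim (pvp (Dorig n (S L)) x) 0) = PVD n L x).
    rewrite (is_lim_unique _ _ _ (pvD_lim n L x hn hx)). reflexivity. }
  assert (H2 : forall y, -1 < y < 1 -> Derive (cauchy_pv D) y = PVD1 n L y).
  { intros y hy. rewrite (Derive_ext_loc (cauchy_pv D) (PVD n L)).
    - apply is_derive_unique, PVD_deriv, hy.
    - apply (locally_interval _ y (-1) 1); simpl; try lra.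
      intros t h1 h2. apply H1. simpl in *; lra. }
  change (hadamard_fp D 3 r) with (/ INR 2 * Derive (fun y => / INR 1 * Derive (cauchy_pv D) y) r).
  assert (E : Derive (fun y => / INR 1 * Derive (cauchy_pv D) y) r = / INR 1 * PVD2 n L r).
  { rewrite (Derive_ext_loc (fun y => / INR 1 * Derive (cauchy_pv D) y) (fun y => / INR 1 * PVD1 n L y)).
    - apply is_derive_unique. apply (is_derive_scal (PVD1 n L)), PVD1_deriv, hr'.
    - apply (locally_interval _ r (-1) 1); simpl; try lra.
      intros t h1 h2. rewrite H2 by (simpl in *; lra). reflexivity. }
  rewrite E. clear E H1 H2 D.
  replace (2 * S L - 2)%nat with (2 * L)%nat by lia.
  unfold PVD2.
  transitivity ((/ INR 2 * / INR 1 * / (-4) ^ L) * sum_f_R0 (fun j => cj L j * (- PI * T2 (Kj n L j) r)) (2 * L)); [ring|].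
  rewrite !scal_sum. apply sum_eq. intros j hj.
  unfold cj. rewrite Cb_C by lia.
  rewrite !chebU_eq by lra.
  replace (INR (n + 1 + 2 * j - 2 * S L + 1)) with (Kj n L j - 1)
    by (unfold Kj; rewrite plus_INR, minus_INR by lia; rewrite !plus_INR, !mult_INR, (S_INR L); simpl INR; ring).
  replace (INR (n + 3 + 2 * j - 2 * S L + 1)) with (Kj n L j + 1)
    by (unfold Kj; rewrite plus_INR, minus_INR by lia; rewrite !plus_INR, !mult_INR, (S_INR L); simpl INR; ring).
  replace (INR n + 3 - 2 * INR (S L) + 2 * INR j) with (Kj n L j) by (unfold Kj; rewrite S_INR; ring).
  replace (INR n + 4 - 2 * INR (S L) + 2 * INR j) with (Kj n L j + 1) by (unfold Kj; rewrite S_INR; ring).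
  replace (INR n + 2 - 2 * INR (S L) + 2 * INR j) with (Kj n L j - 1) by (unfold Kj; rewrite S_INR; ring).
  set (K := Kj n L j). unfold T2.
  replace ((K - 1) * acos r) with (K * acos r - acos r) by ring.
  replace ((K + 1) * acos r) with (K * acos r + acos r) by ring.
  rewrite sin_minus, sin_plus, cos_acos, sin_acos' by lra.
  pose proof (sqrt_pos1 r hr') as hw. pose proof (sqrt_sq1 r ltac:(lra)) as hw2.
  set (w := sqrt (1 - r ^ 2)) in *. rewrite <- hw2.
  replace ((-4) ^ L) with ((-1) ^ L * 4 ^ L) by (rewrite <- Rpow_mult_distr; f_equal; ring).
  replace ((1 / 2) ^ (2 * S L)) with (/ 4 * / 4 ^ L) by (symmetry; apply half_pow).
  simpl pow at 1. 
  rewrite Rinv_mult, inv_m1_pow.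
  assert (4 ^ L <> 0) by (apply pow_nonzero; lra).
  simpl INR. simpl pow. generalize (sin (K * acos r)) (cos (K * acos r)) (Binomial.C (2 * L) j) ((-1) ^ j) ((-1) ^ L) H. clear H. generalize (4 ^ L). intros. field. split; [lra|exact H].
Qed.
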